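(* Let $(\mathfrak{g},[\cdot,\ldots,\cdot],\varepsilon,\alpha)$ be an $n$-Hom-Lie color algebra and $\mathcal{N}$ a Nijenhuis operator on it. For $\lambda\in\mathbb{K}$ define $$[x_1,\ldots,x_n]_\lambda=[x_1,\ldots,x_n]+\sum_{i=1}^{n-1}\lambda^i[x_1,\ldots,x_n]^i_{\mathcal{N}}.$$ Then this bracket defines a deformation of $\mathfrak{g}$ (i.e. $(\mathfrak{g},[\cdot,\ldots,\cdot]_\lambda,\varepsilon,\alpha)$ is an $n$-Hom-Lie color algebra) which is infinitesimally trivial: $\mathcal{T}_\lambda=\mathrm{id}+\lambda\mathcal{N}$ satisfies $\mathcal{T}_\lambda\circ\alpha=\alpha\circ\mathcal{T}_\lambda$ and $\mathcal{T}_\lambda([x_1,\ldots,x_n]_\lambda)=[\mathcal{T}_\lambda(x_1),\ldots,\mathcal{T}_\lambda(x_n)]$ for all $x_1,\ldots,x_n\in\mathfrak{g}$.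
   Context: $\mathbb{K}$ is a field of characteristic zero and $\Gamma$ an abelian group. A bicharacter is a map $\varepsilon:\Gamma\times\Gamma\to\mathbb{K}\setminus\{0\}$ with $\varepsilon(a,b)\varepsilon(b,a)=1$, $\varepsilon(a,b+c)=\varepsilon(a,b)\varepsilon(a,c)$, $\varepsilon(a+b,c)=\varepsilon(a,c)\varepsilon(b,c)$. For homogeneous $x,y$, $\varepsilon(x,y)=\varepsilon(|x|,|y|)$ and $\varepsilon(x,y_1+\dots+y_k)=\varepsilon(|x|,|y_1|+\dots+|y_k|)$ ($=1$ for an empty sum). An $n$-Hom-Lie color algebra $(\mathfrak{g},[\cdot,\ldots,\cdot],\varepsilon,\alpha)$ is a $\Gamma$-graded vector space with an $n$-linear bracket of degree zero, a bicharacter $\varepsilon$ and a degree-zero linear map $\alpha$ such that for homogeneous elements: (i) $[x_1,\ldots,x_i,x_{i+1},\ldots,x_n]=-\varepsilon(x_i,x_{i+1})[x_1,\ldots,x_{i+1},x_i,\ldots,x_n]$; (ii) $[\alpha(x_1),\ldots,\alpha(x_{n-1}),[y_1,\ldots,y_n]]=\sum_{i=1}^n\varepsilon(x_1+\dots+x_{n-1},y_1+\dots+y_{i-1})[\alpha(y_1),\ldots,\alpha(y_{i-1}),[x_1,\ldots,x_{n-1},y_i],\alpha(y_{i+1}),\ldots,\alpha(y_n)]$. For a degree-zero linear map $\mathcal{N}:\mathfrak{g}\to\mathfrak{g}$ define $[\cdot,\ldots,\cdot]^0_{\mathcal{N}}=[\cdot,\ldots,\cdot]$ and for $1\le j\le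 n-1$: $[x_1,\ldots,x_n]^j_{\mathcal{N}}=\sum_{i_1<\dots<i_j}[x_1,\ldots,\mathcal{N}x_{i_1},\ldots,\mathcal{N}x_{i_j},\ldots,x_n]-\mathcal{N}([x_1,\ldots,x_n]^{j-1}_{\mathcal{N}})$, where the sum applies $\mathcal{N}$ exactly to the entries in positions $i_1,\ldots,i_j$. $\mathcal{N}$ is a Nijenhuis operator if $\mathcal{N}\circ\alpha=\alpha\circ\mathcal{N}$ and $[\mathcal{N}x_1,\ldots,\mathcal{N}x_n]=\mathcal{N}([x_1,\ldots,x_n]^{n-1}_{\mathcal{N}})$ for all $x_i$. *)

(* Defs.v *)
From mathcomp Require Import all_boot all_algebra.
Set Implicit Arguments. Unset Strict Implicit. Unset Printing Implicit Defensive.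
Import GRing.Theory.
Local Open Scope ring_scope.

Section NHomLieColor.
Variables (K : fieldType) (Γ : zmodType) (V : lmodType K) (n : nat).

Definition bicharacter (eps : Γ -> Γ -> K) :=
  [/\ forall a b, eps a b != 0,
      forall a b, eps a b * eps b a = 1,
      forall a b c, eps a (b + c) = eps a b * eps a c
    & forall a b c, eps (a + b) c = eps a c * eps b c].

(* G g is the homogeneous component of degree g; V = (+)_g G g *)
Definition graded (G : Γ -> {pred V}) :=
  [/\ forall g, 0 \in G g /\ (forall (a : K) u v, u \in G g -> v \in G g -> a *: u + v \in G g),
      forall v : V, exists (s : seq Γ) (f : Γ -> V),
        [/\ uniq s, forall g, f g \in G g & v = \sum_(g <- s) f g]
    & forall (s : seq Γ) (f : Γ -> V), uniq s -> (forall g, f g \in G g) ->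
        \sum_(g <- s) f g = 0 -> forall g, g \in s -> f g = 0].

Definition degree0 (G : Γ -> {pred V}) (f : V -> V) :=
  forall g v, v \in G g -> f v \in G g.

Definition upd (x : {ffun 'I_n -> V}) (i : 'I_n) (v : V) : {ffun 'I_n -> V} :=
  [ffun k => if k == i then v else x k].

Definition swap (x : {ffun 'I_n -> V}) (i j : 'I_n) : {ffun 'I_n -> V} :=
  [ffun k => if k == i then x j else if k == j then x i else x k].

Definition fmap (f : V -> V) (x : {ffun 'I_n -> V}) : {ffun 'I_n -> V} :=
  [ffun k => f (x k)].

(* [x_1, ..., x_{n-1}, z] *)
Definition catl (x : {ffun 'I_n.-1 -> V}) (z : V) : {ffun 'I_n -> V} :=
  [ffun k : 'I_n => if insub (nat_of_ord k) : option 'I_n.-1 is Some k' then x k' else z].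

Definition multilinear (br : {ffun 'I_n -> V} -> V) :=
  forall (x : {ffun 'I_n -> V}) (i : 'I_n) (a : K) (u v : V),
    br (upd x i (a *: u + v)) = a *: br (upd x i u) + br (upd x i v).

Record nHomLieColor (G : Γ -> {pred V}) (eps : Γ -> Γ -> K)
    (br : {ffun 'I_n -> V} -> V) (alpha : {linear V -> V}) : Prop := {
  hlc_bichar : bicharacter eps;
  hlc_graded : graded G;
  hlc_multilinear : multilinear br;
  hlc_alpha_deg0 : degree0 G alpha;
  hlc_br_deg0 : forall (d : 'I_n -> Γ) (x : {ffun 'I_n -> V}),
      (forall i, x i \in G (d i)) -> br x \in G (\sum_(i < n) d i);
  hlc_skew : forall (d : 'I_n -> Γ) (x : {ffun 'I_n -> V}) (i j : 'I_n),
      (forall k, x k \in G (d k)) -> nat_of_ord j = (nat_of_ord i).+1 ->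
      br x = - (eps (d i) (d j) *: br (swap x i j));
  hlc_jacobi : forall (dx : 'I_n.-1 -> Γ) (dy : 'I_n -> Γ)
           (x : {ffun 'I_n.-1 -> V}) (y : {ffun 'I_n -> V}),
      (forall k, x k \in G (dx k)) -> (forall k, y k \in G (dy k)) ->
      br (catl [ffun k => alpha (x k)] (br y)) =
      \sum_(i < n) eps (\sum_(k < n.-1) dx k) (\sum_(k < n | (k < i)%N) dy k)
         *: br (upd (fmap alpha y) i (br (catl x (y i)))) }.

Definition applyN (N : V -> V) (S : {set 'I_n}) (x : {ffun 'I_n -> V}) : {ffun 'I_n -> V} :=
  [ffun k => if k \in S then N (x k) else x k].

Fixpoint brN (N : V -> V) (br : {ffun 'I_n -> V} -> V) (j : nat) (x : {ffun 'I_n -> V}) : V :=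
  match j with
  | 0 => br x
  | j'.+1 => \sum_(S : {set 'I_n} | #|S| == j'.+1) br (applyN N S x) - N (brN N br j' x)
  end.

Definition Nijenhuis (G : Γ -> {pred V}) (br : {ffun 'I_n -> V} -> V)
    (alpha N : {linear V -> V}) :=
  [/\ degree0 G N,
      forall v, N (alpha v) = alpha (N v)
    & forall x : {ffun 'I_n -> V}, br (fmap N x) = N (brN N br n.-1 x)].

Definition deformed_br (N : V -> V) (br : {ffun 'I_n -> V} -> V) (lambda : K)
    (x : {ffun 'I_n -> V}) : V :=
  br x + \sum_(1 <= i < n) lambda ^+ i *: brN N br i x.

Definition Tl (N : V -> V) (lambda : K) (v : V) : V := v + lambda *: N v.

End NHomLieColor.

(* Main.v *)
Require Import Defs.
From mathcomp Require Import all_boot all_algebra ring.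
Set Implicit Arguments. Unset Strict Implicit. Unset Printing Implicit Defensive.
Import GRing.Theory.
Local Open Scope ring_scope.


Section Poly.
Variables (K : fieldType) (V : lmodType K).

Definition polyf (F : K -> V) :=
  exists d (c : nat -> V), forall mu, F mu = \sum_(l < d) mu ^+ l *: c l.

Lemma polyf_ext F1 F2 : (forall mu, F1 mu = F2 mu) -> polyf F1 -> polyf F2.
Proof. by move=> E [d [c H]]; exists d, c => mu; rewrite -E. Qed.

Lemma polyf_pad (F : K -> V) d (c : nat -> V) : (forall mu, F mu = \sum_(l < d) mu ^+ l *: c l) ->
  forall d', (d <= d')%N -> forall mu,
  F mu = \sum_(l < d') mu ^+ l *: (if (l < d)%N then c l else 0).
Proof.
move=> H d' le mu; rewrite H -(subnKC le) big_split_ord /=.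
rewrite [X in _ + X]big1 ?addr0; last first.
  by move=> i _; rewrite /= ltnNge leq_addr /= scaler0.
by apply: eq_bigr => i _; rewrite /= ltn_ord.
Qed.

Lemma polyf_const v : polyf (fun _ => v).
Proof. by exists 1%N, (fun _ => v) => mu; rewrite big_ord1 expr0 scale1r. Qed.

Lemma polyf_add F1 F2 : polyf F1 -> polyf F2 -> polyf (fun mu => F1 mu + F2 mu).
Proof.
move=> [d1 [c1 H1]] [d2 [c2 H2]].
exists (maxn d1 d2), (fun l => (if (l < d1)%N then c1 l else 0) + (if (l < d2)%N then c2 l else 0)) => mu.
rewrite (polyf_pad H1 (leq_maxl d1 d2)) (polyf_pad H2 (leq_maxr d1 d2)) -big_split /=.
by apply: eq_bigr => i _; rewrite scalerDr.
Qed.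

Lemma polyf_scale a F : polyf F -> polyf (fun mu => a *: F mu).
Proof.
move=> [d [c H]]; exists d, (fun l => a *: c l) => mu.
rewrite H scaler_sumr; apply: eq_bigr => i _; by rewrite !scalerA mulrC.
Qed.

Lemma sum_mulX (mu : K) d (c : nat -> V) :
  mu *: \sum_(l < d) mu ^+ l *: c l =
  \sum_(l < d.+1) mu ^+ l *: (if nat_of_ord l is l'.+1 then c l' else 0).
Proof.
rewrite big_ord_recl /= scaler0 add0r scaler_sumr; apply: eq_bigr => i _.
by rewrite scalerA -exprS.
Qed.

Lemma polyf_mulX F : polyf F -> polyf (fun mu => mu *: F mu).
Proof.
move=> [d [c H]]; exists d.+1, (fun l => if l is l'.+1 then c l' else 0) => mu.
by rewrite H sum_mulX.
Qed.

Lemma polyf_mulXn i F : polyf F -> polyf (fun mu => mu ^+ i *: F mu).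
Proof.
elim: i => [|i IH] P.
  by apply: polyf_ext P => mu; rewrite expr0 scale1r.
apply: polyf_ext (polyf_mulX (IH P)) => mu; by rewrite scalerA -exprS.
Qed.

Lemma polyf_lin (f : {linear V -> V}) F : polyf F -> polyf (fun mu => f (F mu)).
Proof.
move=> [d [c H]]; exists d, (fun l => f (c l)) => mu.
by rewrite H linear_sum; apply: eq_bigr => i _; rewrite linearZ.
Qed.

Lemma polyf_sum (I : Type) (r : seq I) (P : pred I) (F : I -> K -> V) :
  (forall i, polyf (F i)) -> polyf (fun mu => \sum_(i <- r | P i) F i mu).
Proof.
move=> H; elim: r => [|a r IH].
  by apply: polyf_ext (polyf_const 0) => mu; rewrite big_nil.
case Pa: (P a).
  by apply: polyf_ext (polyf_add (H a) IH) => mu; rewrite big_cons Pa.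
by apply: polyf_ext IH => mu; rewrite big_cons Pa.
Qed.

Lemma polyf_sub F1 F2 : polyf F1 -> polyf F2 -> polyf (fun mu => F1 mu - F2 mu).
Proof.
move=> P1 P2; apply: polyf_ext (polyf_add P1 (polyf_scale (-1) P2)) => mu.
by rewrite scaleN1r.
Qed.

Hypothesis char0 : [pchar K] =i pred0.

Lemma two_pow_neq l d : (l < d)%N -> ((2 : K) ^+ l - 2 ^+ d) != 0.
Proof.
move=> ld; rewrite -opprB oppr_eq0 -!natrX -natrB; last first.
  by rewrite leq_exp2l // ltnW.
move/pcharf0P: char0 => ->; by rewrite subn_eq0 -ltnNge ltn_exp2l.
Qed.

Lemma coef0 d (c : nat -> V) : (forall mu : K, \sum_(l < d) mu ^+ l *: c l = 0) ->
  forall l, (l < d)%N -> c l = 0.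
Proof.
elim: d c => [|d IH] c H l Hl; first by [].
have E : forall mu : K, \sum_(l < d.+1) mu ^+ l *: (((2 : K) ^+ l - 2 ^+ d) *: c l) = 0.
  move=> mu.
  rewrite (eq_bigr (fun l : 'I_d.+1 => (2 * mu) ^+ l *: c l - 2 ^+ d *: (mu ^+ l *: c l))); last first.
    move=> i _; rewrite !scalerA -scalerBl; congr (_ *: _); rewrite exprMn; ring.
  by rewrite sumrB -scaler_sumr !H scaler0 subr0.
have H1 : forall l, (l < d)%N -> c l = 0.
  move=> k kd.
  have Hk : ((2 : K) ^+ k - 2 ^+ d) *: c k = 0.
    apply: (IH (fun l => ((2 : K) ^+ l - 2 ^+ d) *: c l)) kd => mu.
    by have := E mu; rewrite big_ord_recr /= subrr scale0r !scaler0 addr0.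
  by rewrite -(scalerK (two_pow_neq kd) (c k)) Hk scaler0.
have Hd : c d = 0.
  have := H 1; rewrite big_ord_recr /= big1 ?add0r ?expr1n ?scale1r //.
  by move=> i _; rewrite H1 ?scaler0.
by move: Hl; rewrite ltnS leq_eqVlt => /orP [/eqP -> | /H1].
Qed.

Lemma polyf_Tl0 (N : {linear V -> V}) F : polyf F ->
  (forall mu, Tl N mu (F mu) = 0) -> forall mu, F mu = 0.
Proof.
move=> [d [c H]] HT.
pose c' l := if (l < d)%N then c l else 0.
have Hp : forall mu, F mu = \sum_(l < d.+1) mu ^+ l *: c' l.
  exact: (polyf_pad H (leqnSn d)).
pose e l := c' l + (if l is l'.+1 then N (c' l') else 0).
have He : forall mu, \sum_(l < d.+2) mu ^+ l *: e l = 0.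
  move=> mu; transitivity (Tl N mu (F mu)); last exact: HT.
  rewrite /Tl (Hp mu) linear_sum.
  have -> : \sum_(i < d.+1) N (mu ^+ i *: c' i) = \sum_(i < d.+1) mu ^+ i *: N (c' i).
    by apply: eq_bigr => i _; rewrite linearZ.
  rewrite (sum_mulX mu d.+1 (fun l => N (c' l))) /e.
  rewrite (eq_bigr (fun l : 'I_d.+2 => mu ^+ l *: c' l + mu ^+ l *: (if nat_of_ord l is l'.+1 then N (c' l') else 0))); last first.
    by move=> i _; rewrite scalerDr.
  rewrite big_split /= big_ord_recr /=.
  by rewrite {2}/c' ltnNge leqW //= scaler0 addr0.
have Hc : forall l, c' l = 0.
  elim=> [|l IHl]; first by have := coef0 He (ltn0Sn _); rewrite /e addr0.
  rewrite /c'; case: ifP => // ld.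
  have := coef0 He (l:=l.+1) (leqW (leqW ld)); rewrite /e IHl linear0 addr0.
  by rewrite /c' ld.
move=> mu; rewrite (Hp mu) big1 // => i _; by rewrite -/(c' i) Hc scaler0.
Qed.

End Poly.


Section ML.
Variables (K : fieldType) (V : lmodType K) (n : nat).
Implicit Types (x : {ffun 'I_n -> V}) (B : {ffun 'I_n -> V} -> V).

Lemma upd_id x i : upd x i (x i) = x.
Proof. by apply/ffunP => k; rewrite !ffunE; case: eqP => // ->. Qed.

Lemma upd_upd x i u v : upd (upd x i u) i v = upd x i v.
Proof. by apply/ffunP => k; rewrite !ffunE; case: eqP. Qed.

Section B.
Variable B : {ffun 'I_n -> V} -> V.
Hypothesis HB : multilinear B.

Lemma ml_addv x i u v : B (upd x i (u + v)) = B (upd x i u) + B (upd x i v).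
Proof. by rewrite -{1}(scale1r u) HB scale1r. Qed.

Lemma ml_zero x i : B (upd x i 0) = 0.
Proof.
have := ml_addv x i 0 0; rewrite addr0 => /eqP.
by rewrite -subr_eq0 opprD addrA subrr add0r oppr_eq0 => /eqP.
Qed.

Lemma ml_scalev x i a u : B (upd x i (a *: u)) = a *: B (upd x i u).
Proof. by rewrite -(addr0 (a *: u)) HB ml_zero addr0. Qed.

Lemma ml_sumv x i d (F : 'I_d -> V) :
  B (upd x i (\sum_(l < d) F l)) = \sum_(l < d) B (upd x i (F l)).
Proof.
elim: d F => [|d IH] F; first by rewrite !big_ord0 ml_zero.
by rewrite !big_ord_recr /= ml_addv IH.
Qed.

Lemma polyf_ml (x : K -> {ffun 'I_n -> V}) :
  (forall k, polyf (fun mu => x mu k)) -> polyf (fun mu => B (x mu)).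
Proof.
suff H : forall m, (m <= n)%N -> forall x : K -> {ffun 'I_n -> V},
    (forall k, polyf (fun mu => x mu k)) ->
    (forall k : 'I_n, (m <= k)%N -> forall mu, x mu k = x 0 k) ->
    polyf (fun mu => B (x mu)).
  by move=> Hx; apply: (H n (leqnn n)) => // k; rewrite leqNgt ltn_ord.
elim=> [|m IH] le y Hx Hc.
  apply: polyf_ext (polyf_const (B (y 0))) => mu.
  by have -> : y mu = y 0 by apply/ffunP => k; rewrite Hc.
pose i := Ordinal le.
have [d [c Hi]] := Hx i.
have E : forall mu, B (y mu) = \sum_(l < d) mu ^+ l *: B (upd (y mu) i (c l)).
  move=> mu; rewrite -{1}(upd_id (y mu) i) Hi ml_sumv.
  by apply: eq_bigr => l _; rewrite ml_scalev.
suff P : polyf (fun mu => \sum_(l < d) mu ^+ l *: B (upd (y mu) i (c l))).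
  by apply: polyf_ext P => mu; rewrite E.
apply: polyf_sum => l; apply: polyf_mulXn; apply: (IH (ltnW le)).
  move=> k; case: (eqVneq k i) => [->|ki].
    by apply: polyf_ext (polyf_const (c l)) => mu; rewrite ffunE eqxx.
  by apply: polyf_ext (Hx k) => mu; rewrite ffunE (negbTE ki).
move=> k mk mu; rewrite !ffunE; case: (eqVneq k i) => // ki.
apply: Hc; rewrite ltn_neqAle mk andbT.
by apply: contra ki => /eqP e; apply/eqP/val_inj; rewrite /= e.
Qed.

End B.

Lemma ml_lin (f : {linear V -> V}) B : multilinear B -> multilinear (fun x => f (B x)).
Proof. by move=> HB x i a u v; rewrite /= HB linearP. Qed.

Lemma ml_add B1 B2 : multilinear B1 -> multilinear B2 -> multilinear (fun x => B1 x + B2 x).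
Proof.
move=> H1 H2 x i a u v; rewrite /= H1 H2 scalerDr.
by rewrite -!addrA; congr (_ + _); rewrite addrCA.
Qed.

Lemma ml_scal c B : multilinear B -> multilinear (fun x => c *: B x).
Proof. by move=> H x i a u v; rewrite /= H scalerDr !scalerA mulrC. Qed.

Lemma ml_const0 : multilinear (fun _ : {ffun 'I_n -> V} => 0).
Proof. by move=> x i a u v; rewrite scaler0 addr0. Qed.

Lemma ml_sub B1 B2 : multilinear B1 -> multilinear B2 -> multilinear (fun x => B1 x - B2 x).
Proof.
move=> H1 H2; have := ml_add H1 (ml_scal (-1) H2).
by move=> H x i a u v; have := H x i a u v; rewrite !scaleN1r.
Qed.

Lemma ml_sum (I : Type) (r : seq I) (P : pred I) (F : I -> {ffun 'I_n -> V} -> V) :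
  (forall j, multilinear (F j)) -> multilinear (fun x => \sum_(j <- r | P j) F j x).
Proof.
move=> H; elim: r => [|a r IH].
  by move=> x i b u v; rewrite !big_nil scaler0 addr0.
move=> x i b u v; rewrite !big_cons; case: (P a); last exact: IH.
by apply: (ml_add (H a) IH).
Qed.

Variable N : {linear V -> V}.

Lemma applyN_upd S x i w :
  applyN N S (upd x i w) = upd (applyN N S x) i (if i \in S then N w else w).
Proof. by apply/ffunP => k; rewrite !ffunE; case: eqVneq => // ->. Qed.

Lemma ml_applyN S B : multilinear B -> multilinear (fun x => B (applyN N S x)).
Proof.
move=> HB x i a u v; rewrite /= !applyN_upd.
by case: (i \in S); rewrite ?linearP HB.
Qed.

Variable br : {ffun 'I_n -> V} -> V.
Hypothesis Hbr : multilinear br.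

Lemma ml_brN j : multilinear (brN N br j).
Proof.
elim: j => [|j IH] //=.
apply: ml_sub; first by apply: ml_sum => S; apply: ml_applyN.
exact: ml_lin.
Qed.

Lemma ml_dbr lambda : multilinear (deformed_br N br lambda).
Proof.
apply: ml_add => //; apply: ml_sum => j; apply: ml_scal; exact: ml_brN.
Qed.

Lemma polyf_dbr (x : K -> {ffun 'I_n -> V}) :
  (forall k, polyf (fun mu => x mu k)) ->
  polyf (fun mu => deformed_br N br mu (x mu)).
Proof.
move=> Hx; apply: polyf_add; first exact: polyf_ml.
apply: polyf_sum => j; apply: polyf_mulXn; apply: polyf_ml => //; exact: ml_brN.
Qed.

End ML.


Section Exp.
Variables (K : fieldType) (V : lmodType K) (n : nat).
Variable B : {ffun 'I_n -> V} -> V.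
Hypothesis HB : multilinear B.

Lemma ml_expand (a : K) (y : {ffun 'I_n -> V}) : forall (A : {set 'I_n}) (x : {ffun 'I_n -> V}),
  B [ffun k => if k \in A then x k + a *: y k else x k] =
  \sum_(S : {set 'I_n} | S \subset A) a ^+ #|S| *: B [ffun k => if k \in S then y k else x k].
Proof.
move=> A; move: {2}#|A| (erefl #|A|) => m; elim: m A => [|m IH] A cA x.
  move/eqP: cA; rewrite cards_eq0 => /eqP ->.
  rewrite (big_pred1 set0); last by move=> S; rewrite subset0.
  rewrite cards0 expr0 scale1r; congr B; apply/ffunP => k; by rewrite !ffunE in_set0.
have [i iA] : exists i, i \in A.
  by apply/set0Pn; rewrite -card_gt0 cA.
pose A' := A :\ i.
have cA' : #|A'| = m by move: cA; rewrite (cardsD1 i A) iA add1n => -[].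
pose z := [ffun k => if k \in A' then x k + a *: y k else x k].
have -> : [ffun k => if k \in A then x k + a *: y k else x k] = upd z i (a *: y i + x i).
  apply/ffunP => k; rewrite !ffunE; case: eqVneq => [->|ki]; first by rewrite iA addrC.
  by rewrite in_setD1 ki.
rewrite HB.
have -> : upd z i (x i) = [ffun k => if k \in A' then x k + a *: y k else x k].
  apply/ffunP => k; rewrite !ffunE; case: eqVneq => [->|//]; by rewrite in_setD1 eqxx.
pose x' := upd x i (y i).
have -> : upd z i (y i) = [ffun k => if k \in A' then x' k + a *: y k else x' k].
  apply/ffunP => k; rewrite !ffunE; case: eqVneq => [->|ki]; first by rewrite in_setD1 eqxx.
  by rewrite /x' ?ffunE ?(negbTE ki).
rewrite !IH // [RHS](bigID (fun S : {set 'I_n} => i \in S)) /=; congr (_ + _); last first.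
  by apply: eq_bigl => S; rewrite subsetD1.
rewrite scaler_sumr.
rewrite [RHS](reindex_onto (fun S => i |: S) (fun S => S :\ i)) /=; last first.
  by move=> S /andP [_ iS]; rewrite setD1K.
apply: eq_big => S.
  rewrite /A' subsetD1 subUset sub1set iA setU11 /= andbT.
  case iS: (i \in S) => /=; last by rewrite setU1K ?iS // eqxx !andbT.
  rewrite andbF (setUidPr _) ?sub1set //; case: eqP => E; last by rewrite andbF.
  by have := setD11 i S; rewrite E iS.
rewrite /A' subsetD1 => /andP [_ iS].
rewrite scalerA -exprS cardsU1 iS add1n; congr (_ *: B _).
apply/ffunP => k; rewrite !ffunE in_setU1 /x'; case: eqVneq => // ->.
by rewrite (negbTE iS).
Qed.

Lemma card_le (S : {set 'I_n}) : (#|S| <= n)%N.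
Proof. by have := max_card S; rewrite card_ord. Qed.

Lemma sum_by_card (F : {set 'I_n} -> V) (a : K) :
  \sum_(S : {set 'I_n}) a ^+ #|S| *: F S =
  \sum_(j < n.+1) a ^+ j *: \sum_(S : {set 'I_n} | #|S| == j) F S.
Proof.
rewrite (partition_big (fun S : {set 'I_n} => (inord #|S| : 'I_n.+1)) xpredT) //=.
apply: eq_bigr => j _; rewrite scaler_sumr; apply: eq_big => S.
  have := card_le S.
  move=> le; apply/eqP/eqP => [<-|E]; first by rewrite inordK.
  by apply: val_inj; rewrite /= inordK.
by move=> /eqP <-; rewrite inordK // ltnS card_le.
Qed.

End Exp.


Section Triv.
Variables (K : fieldType) (V : lmodType K) (n : nat).
Variable N : {linear V -> V}.
Variable br : {ffun 'I_n -> V} -> V.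
Hypothesis Hbr : multilinear br.
Hypothesis HN : forall x, br (fmap N x) = N (brN N br n.-1 x).
Hypothesis n0 : (0 < n)%N.

Lemma triv (lam : K) (x : {ffun 'I_n -> V}) :
  Tl N lam (deformed_br N br lam x) = br (fmap (Tl N lam) x).
Proof.
pose b i := brN N br i x.
pose A j := \sum_(S : {set 'I_n} | #|S| == j) br (applyN N S x).
have A0 : A 0%N = b 0%N.
  rewrite /A (big_pred1 set0); last by move=> S; rewrite cards_eq0.
  congr br; apply/ffunP => k; by rewrite !ffunE in_set0.
have An : A n = N (b n.-1).
  rewrite /A (big_pred1 setT); last first.
    move=> S; rewrite /= eqEcard subsetT cardsT card_ord /= eqn_leq card_le.
    done.
  rewrite -HN; congr br; apply/ffunP => k; by rewrite !ffunE in_setT.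
have AS : forall j, A j.+1 = b j.+1 + N (b j) by move=> j; rewrite /b /= subrK.
have R : br (fmap (Tl N lam) x) = \sum_(0 <= j < n.+1) lam ^+ j *: A j.
  rewrite big_mkord -sum_by_card.
  have -> : fmap (Tl N lam) x =
     [ffun k => if k \in [set: 'I_n] then x k + lam *: (fmap N x) k else x k].
    by apply/ffunP => k; rewrite !ffunE in_setT.
  rewrite ml_expand //; apply: eq_big => S; first by rewrite subsetT.
  move=> _; congr (_ *: br _); apply/ffunP => k; by rewrite !ffunE.
rewrite R /deformed_br /Tl.
have Es : br x + \sum_(1 <= i < n) lam ^+ i *: brN N br i x = \sum_(0 <= i < n) lam ^+ i *: b i.
  by rewrite (big_ltn n0) expr0 scale1r.
rewrite Es.
have L2 : lam *: N (\sum_(0 <= i < n) lam ^+ i *: b i) = \sum_(1 <= j < n.+1) lam ^+ j *: N (b j.-1).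
  rewrite linear_sum scaler_sumr big_add1 /=; apply: eq_bigr => i _.
  by rewrite linearZ scalerA exprS.
rewrite L2 [RHS]big_nat_recr //= An [in LHS](big_nat_recr _ _ _ n0) /= addrA; congr (_ + _).
rewrite (big_ltn n0) [X in _ = X](big_ltn n0) /= A0 -addrA; congr (_ + _).
rewrite -big_split; apply: eq_big_nat => j /andP [j1 _].
case: j j1 => // j _ /=; rewrite -scalerDr; congr (_ *: _); exact: (esym (AS j)).
Qed.

End Triv.


Section Grad.
Variables (K : fieldType) (Γ : zmodType) (V : lmodType K) (n : nat).
Variable G : Γ -> {pred V}.
Hypothesis HG : forall g, 0 \in G g /\ (forall (a : K) u v, u \in G g -> v \in G g -> a *: u + v \in G g).
Variable N : {linear V -> V}.
Hypothesis HN : degree0 G N.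
Variable br : {ffun 'I_n -> V} -> V.
Hypothesis Hdeg : forall (d : 'I_n -> Γ) (x : {ffun 'I_n -> V}),
      (forall i, x i \in G (d i)) -> br x \in G (\sum_(i < n) d i).

Lemma G0 g : 0 \in G g. Proof. by case: (HG g). Qed.
Lemma GD g u v : u \in G g -> v \in G g -> u + v \in G g.
Proof. by case: (HG g) => _ H /(H 1) {}H /H; rewrite scale1r. Qed.
Lemma GZ g a u : u \in G g -> a *: u \in G g.
Proof. by case: (HG g) => H0 H Hu; have := H a u 0 Hu H0; rewrite addr0. Qed.
Lemma GB g u v : u \in G g -> v \in G g -> u - v \in G g.
Proof. by move=> Hu Hv; rewrite -scaleN1r; apply: GD => //; apply: GZ. Qed.
Lemma Gsum g (I : Type) (r : seq I) (P : pred I) (F : I -> V) :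
  (forall i, P i -> F i \in G g) -> \sum_(i <- r | P i) F i \in G g.
Proof.
move=> H; elim: r => [|a r IH]; first by rewrite big_nil G0.
rewrite big_cons; case Pa: (P a) => //; apply: GD => //; exact: H.
Qed.

Lemma applyN_deg (d : 'I_n -> Γ) (x : {ffun 'I_n -> V}) S : (forall i, x i \in G (d i)) ->
  forall i, applyN N S x i \in G (d i).
Proof. by move=> Hx i; rewrite ffunE; case: ifP => _; [apply: HN|]; apply: Hx. Qed.

Lemma brN_deg j (d : 'I_n -> Γ) (x : {ffun 'I_n -> V}) : (forall i, x i \in G (d i)) ->
  brN N br j x \in G (\sum_(i < n) d i).
Proof.
move=> Hx; elim: j => [|j IH] /=; first exact: Hdeg.
apply: GB; last exact: HN.
apply: Gsum => S _; apply: Hdeg; exact: applyN_deg.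
Qed.

Lemma dbr_deg lam (d : 'I_n -> Γ) (x : {ffun 'I_n -> V}) : (forall i, x i \in G (d i)) ->
  deformed_br N br lam x \in G (\sum_(i < n) d i).
Proof.
move=> Hx; apply: GD; first exact: Hdeg.
apply: Gsum => i _; apply: GZ; exact: brN_deg.
Qed.

Variable eps : Γ -> Γ -> K.
Hypothesis Hskew : forall (d : 'I_n -> Γ) (x : {ffun 'I_n -> V}) (i j : 'I_n),
      (forall k, x k \in G (d k)) -> nat_of_ord j = (nat_of_ord i).+1 ->
      br x = - (eps (d i) (d j) *: br (swap x i j)).

Definition sw (i j k : 'I_n) := if k == i then j else if k == j then i else k.

Lemma swK i j : involutive (sw i j).
Proof.
move=> k; rewrite /sw; case: (eqVneq k i) => [->|ki].
  by rewrite eqxx; case: eqVneq => // ->.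
case: (eqVneq k j) => [->|kj]; first by rewrite eqxx.
by rewrite (negbTE ki) (negbTE kj).
Qed.

Lemma swap_applyN S (x : {ffun 'I_n -> V}) i j :
  swap (applyN N S x) i j = applyN N (sw i j @^-1: S) (swap x i j).
Proof.
apply/ffunP => k; rewrite !ffunE inE /sw.
by case: (eqVneq k i) => _; [|case: (eqVneq k j) => _]; rewrite ?ffunE.
Qed.

Lemma brN_skew jj (d : 'I_n -> Γ) (x : {ffun 'I_n -> V}) (i j : 'I_n) :
  (forall k, x k \in G (d k)) -> nat_of_ord j = (nat_of_ord i).+1 ->
  brN N br jj x = - (eps (d i) (d j) *: brN N br jj (swap x i j)).
Proof.
move=> Hx Hij; elim: jj => [|jj IH] /=; first exact: Hskew.
set e := eps (d i) (d j).
have E : \sum_(S : {set 'I_n} | #|S| == jj.+1) br (applyN N S x) =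
         - (e *: \sum_(S : {set 'I_n} | #|S| == jj.+1) br (applyN N S (swap x i j))).
  have inj : injective (fun S : {set 'I_n} => sw i j @^-1: S).
    apply: (can_inj (g := fun S : {set 'I_n} => sw i j @^-1: S)) => S.
    by apply/setP => k; rewrite !inE swK.
  rewrite [in RHS](reindex_inj inj) /= scaler_sumr -sumrN.
  apply: eq_big => S; first by rewrite card_preimset //; apply: (can_inj (swK i j)).
  move=> _; rewrite -swap_applyN; apply: Hskew => //; exact: applyN_deg.
rewrite E IH linearN linearZ /= scalerN opprK scalerBr opprB addrC.
by rewrite linearZ.
Qed.

Lemma dbr_skew lam (d : 'I_n -> Γ) (x : {ffun 'I_n -> V}) (i j : 'I_n) :
  (forall k, x k \in G (d k)) -> nat_of_ord j = (nat_of_ord i).+1 ->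
  deformed_br N br lam x = - (eps (d i) (d j) *: deformed_br N br lam (swap x i j)).
Proof.
move=> Hx Hij; rewrite /deformed_br (Hskew Hx Hij) scalerDr opprD scaler_sumr -sumrN.
congr (_ + _); apply: eq_bigr => k _; rewrite (brN_skew k Hx Hij).
by rewrite scalerN scalerA mulrC -scalerA.
Qed.

End Grad.


Section Aux.
Variables (K : fieldType) (V : lmodType K).
Variable N : {linear V -> V}.

Lemma TlD mu u v : Tl N mu (u + v) = Tl N mu u + Tl N mu v.
Proof. by rewrite /Tl linearD scalerDr addrACA. Qed.
Lemma Tl0 mu : Tl N mu 0 = 0.
Proof. by rewrite /Tl linear0 scaler0 addr0. Qed.
Lemma TlZ mu a u : Tl N mu (a *: u) = a *: Tl N mu u.
Proof. by rewrite /Tl linearZ scalerDr !scalerA mulrC. Qed.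
Lemma TlB mu u v : Tl N mu (u - v) = Tl N mu u - Tl N mu v.
Proof. by rewrite -!scaleN1r TlD TlZ. Qed.
Lemma Tl_sum mu (I : Type) (r : seq I) (P : pred I) (F : I -> V) :
  Tl N mu (\sum_(i <- r | P i) F i) = \sum_(i <- r | P i) Tl N mu (F i).
Proof. exact: (big_morph _ (TlD mu) (Tl0 mu)). Qed.

Variable n : nat.
Lemma fmap_catl (f : V -> V) (a : {ffun 'I_n.-1 -> V}) z :
  fmap f (catl a z) = catl [ffun k => f (a k)] (f z).
Proof. by apply/ffunP => k; rewrite !ffunE; case: insub => [k'|]; rewrite ?ffunE. Qed.
Lemma fmap_upd (f : V -> V) (z : {ffun 'I_n -> V}) i w :
  fmap f (upd z i w) = upd (fmap f z) i (f w).
Proof. by apply/ffunP => k; rewrite !ffunE; case: eqP; rewrite ?ffunE. Qed.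
Lemma polyf_catl (a : {ffun 'I_n.-1 -> V}) (F : K -> V) k :
  polyf F -> polyf (fun mu => catl a (F mu) k).
Proof.
move=> P.
have E : forall mu, catl a (F mu) k =
   match (insub (nat_of_ord k) : option 'I_n.-1) with Some k' => a k' | None => F mu end.
  by move=> mu; rewrite /catl ffunE.
apply: polyf_ext (fun mu => esym (E mu)) _.
case: (insub (nat_of_ord k) : option 'I_n.-1) => [k'|] //; exact: polyf_const.
Qed.
Lemma polyf_upd (z : {ffun 'I_n -> V}) i (F : K -> V) k :
  polyf F -> polyf (fun mu => upd z i (F mu) k).
Proof.
move=> P; have E : forall mu, upd z i (F mu) k = if k == i then F mu else z k.
  by move=> mu; rewrite ffunE.
apply: polyf_ext (fun mu => esym (E mu)) _.
case: (k == i) => //; exact: polyf_const.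
Qed.
End Aux.

Unset Implicit Arguments.

Theorem theorem6p3 (K : fieldType) (Γ : zmodType) (V : lmodType K) (n : nat)
    (G : Γ -> {pred V}) (eps : Γ -> Γ -> K) (br : {ffun 'I_n -> V} -> V)
    (alpha N : {linear V -> V}) :
  [pchar K] =i pred0 -> (2 <= n)%N ->
  nHomLieColor G eps br alpha -> Nijenhuis G br alpha N ->
  forall lambda : K,
    [/\ nHomLieColor G eps (deformed_br N br lambda) alpha,
        (forall v : V, Tl N lambda (alpha v) = alpha (Tl N lambda v))
      & (forall x : {ffun 'I_n -> V},
           Tl N lambda (deformed_br N br lambda x) = br (fmap (Tl N lambda) x))].
Proof.
move=> char0 n2 H [HN0 HNa HNij] lam.
case: H => Hbi Hgr Hml Had Hdeg Hskew Hjac.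
have HG : forall g, 0 \in G g /\ (forall (a : K) u v, u \in G g -> v \in G g -> a *: u + v \in G g).
  by case: Hgr.
have n0 : (0 < n)%N by apply: leq_trans n2.
have Ttriv := triv Hml HNij n0.
have Tal : forall mu v, Tl N mu (alpha v) = alpha (Tl N mu v).
  by move=> mu v; rewrite /Tl HNa linearD linearZ.
have Tdeg : forall mu, degree0 G (Tl N mu).
  by move=> mu g v Hv; rewrite /Tl addrC; case: (HG g) => _; apply => //; apply: HN0.
split => //.
constructor => //.
- exact: ml_dbr.
- by move=> d x Hx; apply: dbr_deg.
- by move=> d x i j Hx Hij; apply: (dbr_skew HN0 Hskew lam Hx Hij).
move=> dx dy x y Hx Hy.
set L := fun mu => deformed_br N br mu (catl [ffun k => alpha (x k)] (deformed_br N br mu y)).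
set R := fun mu => \sum_(i < n) eps (\sum_(k < n.-1) dx k) (\sum_(k < n | (k < i)%N) dy k)
         *: deformed_br N br mu (upd (fmap alpha y) i (deformed_br N br mu (catl x (y i)))).
suff : forall mu, L mu - R mu = 0 by move=> /(_ lam) /eqP; rewrite subr_eq0 => /eqP.
apply: (polyf_Tl0 char0 (N := N)).
  apply: polyf_sub.
    apply: (polyf_dbr N Hml) => k; apply: polyf_catl.
    by apply: (polyf_dbr N Hml) => k'; apply: polyf_const.
  apply: polyf_sum => i; apply: polyf_scale; apply: (polyf_dbr N Hml) => k.
  apply: polyf_upd; apply: (polyf_dbr N Hml) => k'; exact: polyf_const.
move=> mu; rewrite TlB; apply/eqP; rewrite subr_eq0; apply/eqP.
rewrite /L /R Ttriv fmap_catl Ttriv Tl_sum.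
have -> : [ffun k => Tl N mu ([ffun k0 => alpha (x k0)] k)] = [ffun k => alpha ([ffun k0 => Tl N mu (x k0)] k)].
  by apply/ffunP => k; rewrite !ffunE Tal.
rewrite (Hjac dx dy); last first.
- by move=> k; rewrite ?ffunE; apply: Tdeg; first [exact: Hx | exact: Hy].
- by move=> k; rewrite ?ffunE; apply: Tdeg; first [exact: Hx | exact: Hy].
apply: eq_bigr => i _; rewrite TlZ Ttriv fmap_upd Ttriv fmap_catl; congr (_ *: br _).
apply/ffunP => k; rewrite !ffunE; case: eqP => // _; by rewrite Tal.
Qed.
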